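(* Let $p_1,\ldots,p_m\in[0,1]$ and $\alpha\in[0,1]$, and let $\mathcal{U}_\alpha$, $\mathcal{X}_\alpha$, $p_{(i:I)}$ and $h_\alpha$ be as in the context. Then for every $I\subseteq\{1,\ldots,m\}$: $I\in\mathcal{X}_\alpha$ if and only if there exists some $1\le i\le |I|$ such that $h_\alpha\, p_{(i:I)}\le i\alpha$.
   Context: Setting: $m$ hypotheses with $p$-values $p_1,\ldots,p_m\in[0,1]$. For $I\subseteq\{1,\ldots,m\}$ and $1\le i\le |I|$, $p_{(i:I)}$ denotes the $i$-th smallest value of the multiset $\{p_j: j\in I\}$. The Simes local test at level $\alpha$ rejects $I$ (written $I\in\mathcal{U}_\alpha$) iff there is $1\le i\le |I|$ with $|I|\,p_{(i:I)}\le i\alpha$ (so $\emptyset\notin\mathcal{U}_\alpha$). Closed testing: $\mathcal{X}_\alpha=\{I\subseteq\{1,\ldots,m\}: J\in\mathcal{U}_\alpha \text{ for all } J\supseteq I,\ J\subseteq\{1,\ldots,m\}\}$. Let $r_1,\ldots,r_m$ be a permutation of $1,\ldots,m$ with $p_{r_1}\le\cdots\le p_{r_m}$, and $K_i=\{r_{m-i+1},\ldots,r_m\}$ (indices of the $i$ largest $p$-values), $i=0,\ldots,m$. Define $h_\alpha=\max\{0\le i\le m: K_i\notin\mathcal{U}_\alpha\}$. *)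

(* Defs.v *)
From HB Require Import structures.
From mathcomp Require Import all_boot all_order all_algebra all_fingroup.
Set Implicit Arguments. Unset Strict Implicit. Unset Printing Implicit Defensive.
Import Order.TTheory GRing.Theory Num.Theory.
Local Open Scope ring_scope.

Section Simes.
Variables (R : realFieldType) (m : nat).

(* p_(i:I): the i-th smallest (1-based) of the multiset {p_j : j in I};
   meaningful for 1 <= i <= #|I|. *)
Definition pord (p : 'I_m -> R) (I : {set 'I_m}) (i : nat) : R :=
  nth 0 (sort <=%R [seq p j | j <- enum I]) i.-1.

Definition simes_rej (alpha : R) (p : 'I_m -> R) (I : {set 'I_m}) : bool :=
  [exists i : 'I_#|I|, #|I|%:R * pord p I i.+1 <= (i.+1)%:R * alpha].

Definition closed_rej (alpha : R) (p : 'I_m -> R) (I : {set 'I_m}) : bool :=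
  [forall J : {set 'I_m}, (I \subset J) ==> simes_rej alpha p J].

(* With r a permutation listing indices by nondecreasing p-value
   (0-based: r k is r_{k+1}), K_i = indices of the i largest p-values. *)
Definition Kset (r : {perm 'I_m}) (i : nat) : {set 'I_m} :=
  [set r k | k : 'I_m & m - i <= k]%N.

Definition h_alpha (alpha : R) (p : 'I_m -> R) (r : {perm 'I_m}) : nat :=
  \max_(i < m.+1 | ~~ simes_rej alpha p (Kset r i)) i.

End Simes.

(* Main.v *)
Require Import Defs.
From HB Require Import structures.
From mathcomp Require Import all_boot all_order all_algebra all_fingroup.
From mathcomp Require Import zify.
Import Order.TTheory GRing.Theory Num.Theory.
Set Implicit Arguments. Unset Strict Implicit. Unset Printing Implicit Defensive.
Local Open Scope ring_scope.

Definition Ncnt (R : realFieldType) (m : nat) (p : 'I_m -> R) (J : {set 'I_m}) (x : R) : nat :=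
  #|[set j in J | p j <= x]|.

Definition svals (R : realFieldType) (m : nat) (p : 'I_m -> R) (J : {set 'I_m}) : seq R :=
  sort <=%R [seq p j | j <- enum J].

Lemma svals_sorted (R : realFieldType) m (p : 'I_m -> R) J : sorted <=%R (svals p J).
Proof. apply: sort_sorted; exact: le_total. Qed.

Lemma size_svals (R : realFieldType) m (p : 'I_m -> R) J : size (svals p J) = #|J|.
Proof. by rewrite size_sort size_map cardE. Qed.

Lemma count_svals (R : realFieldType) m (p : 'I_m -> R) J x :
  count (fun v => v <= x) (svals p J) = Ncnt p J x.
Proof.
have hp : perm_eq (svals p J) [seq p j | j <- enum J] by rewrite /svals perm_sort.
rewrite (seq.permP hp) count_map -size_filter /Ncnt cardE.
apply: perm_size; apply: uniq_perm.
- by apply: filter_uniq; apply: enum_uniq.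
- exact: enum_uniq.
by move=> j; rewrite mem_filter !mem_enum !inE andbC.
Qed.

Lemma count_true (T : Type) (l : seq T) : count (fun _ => true) l = size l.
Proof. by elim: l => //= a l ->. Qed.

Lemma sortedA (R : realFieldType) (s : seq R) i :
  sorted <=%R s -> (i < size s)%N -> (i.+1 <= count (fun v => (v <= nth 0 s i)%R) s)%N.
Proof.
move=> ss lti.
rewrite -[X in (_ <= count _ X)%N](cat_take_drop i.+1 s) count_cat.
have -> : count (fun v => (v <= nth 0 s i)%R) (take i.+1 s) = i.+1.
  rewrite (@eq_in_count _ _ (fun _ => true)); last first.
    move=> v /(nthP 0) [k]; rewrite size_takel // => ltk <-.
    rewrite nth_take //=.
    apply: (sorted_leq_nth le_trans lexx) => //; rewrite ?inE //.
    exact: leq_trans ltk lti.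
  by rewrite count_true size_takel.
exact: leq_addr.
Qed.

Lemma sortedB (R : realFieldType) (s : seq R) x :
  sorted <=%R s -> (0 < count (fun v => (v <= x)%R) s)%N ->
  nth 0 s (count (fun v => v <= x) s).-1 <= x.
Proof.
move=> ss; set c := count _ s => c0.
have cs : (c.-1 < size s)%N.
  have cs0 : (c <= size s)%N := count_size _ s.
  lia.
rewrite leNgt; apply/negP => hlt.
have : (c <= c.-1)%N.
  rewrite {1}/c -(cat_take_drop c.-1 s) count_cat.
  have -> : count (fun v => v <= x) (drop c.-1 s) = 0%N.
    apply/eqP; rewrite -leqn0 leqNgt -has_count; apply/negP => /hasP [v].
    move=> /(nthP 0) [k]; rewrite size_drop => ltk <-.
    rewrite nth_drop => hv.
    have : nth 0 s c.-1 <= nth 0 s (c.-1 + k).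
      apply: (sorted_leq_nth le_trans lexx) => //; rewrite ?inE ?leq_addr //.
      by rewrite -ltn_subRL.
    move=> h2; move: (le_lt_trans (le_trans h2 hv) hlt); by rewrite ltxx.
  rewrite addn0; apply: leq_trans (count_size _ _) _.
  by rewrite size_take cs.
move=> h; lia.
Qed.

Lemma bridge (R : realFieldType) m (p : 'I_m -> R) (alpha c : R) (J : {set 'I_m}) :
  0 <= c -> 0 <= alpha ->
  (exists i, (i < #|J|)%N /\ c * nth 0 (svals p J) i <= i.+1%:R * alpha) <->
  (exists x, (0 < Ncnt p J x)%N /\ c * x <= (Ncnt p J x)%:R * alpha).
Proof.
move=> c0 a0; split.
- move=> [i [lti hi]]; exists (nth 0 (svals p J) i).
  have hA' := @sortedA R (svals p J) i (svals_sorted p J) ltac:(by rewrite size_svals).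
  rewrite count_svals in hA'.
  split; first exact: leq_trans hA'.
  apply: (le_trans hi); apply: ler_wpM2r => //; by rewrite ler_nat.
- move=> [x [n0 hx]]; exists (Ncnt p J x).-1; split.
  + have : (Ncnt p J x <= #|J|)%N by rewrite -(count_svals p J) -(size_svals p J) count_size.
    move: n0; clear; lia.
  + have hB' := @sortedB R (svals p J) x (svals_sorted p J).
    rewrite count_svals in hB'; have {}hB' := hB' n0.
    rewrite prednK //; apply: le_trans hx; exact: ler_wpM2l.
Qed.

Lemma simesE (R : realFieldType) m (p : 'I_m -> R) (alpha : R) (J : {set 'I_m}) :
  simes_rej alpha p J <->
  (exists i, (i < #|J|)%N /\ #|J|%:R * nth 0 (svals p J) i <= i.+1%:R * alpha).
Proof.
split.
- by move=> /existsP [i hi]; exists i; split; [exact: ltn_ord | exact: hi].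
- by move=> [i [lti hi]]; apply/existsP; exists (Ordinal lti).
Qed.

Lemma Ncnt_ge0 (R : realFieldType) m (p : 'I_m -> R) (J : {set 'I_m}) x :
  (forall j, 0 <= p j) -> (0 < Ncnt p J x)%N -> 0 <= x.
Proof.
move=> hp; rewrite /Ncnt card_gt0 => /set0Pn [j]; rewrite inE => /andP [_ hj].
exact: le_trans (hp j) hj.
Qed.

Lemma Ncnt_split (R : realFieldType) m (p : 'I_m -> R) (J : {set 'I_m}) x :
  (Ncnt p J x + #|[set j in J | (x < p j)%R]|)%N = #|J|.
Proof.
rewrite -(cardsID [set j | p j <= x] J) /Ncnt; congr (_ + _)%N; apply: eq_card => j; by rewrite !inE // -ltNge andbC.
Qed.

Lemma Ncnt_sub (R : realFieldType) m (p : 'I_m -> R) (I J : {set 'I_m}) x :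
  I \subset J -> (Ncnt p I x <= Ncnt p J x)%N.
Proof.
move=> sIJ; apply: subset_leq_card; apply/subsetP => j; rewrite !inE.
by move=> /andP [jI ->]; rewrite (subsetP sIJ) .
Qed.

Lemma memK m (r : {perm 'I_m}) n z : (z \in Kset r n) = (m - n <= (r^-1)%g z)%N.
Proof.
by rewrite -{1}(permKV r z) /Kset mem_imset ?inE //; exact: perm_inj.
Qed.

Lemma card_true_count (T : finType) (P : pred T) : #|[set x | P x]| = count P (enum T).
Proof.
rewrite cardE -size_filter; apply: perm_size; apply: uniq_perm.
- exact: enum_uniq.
- by apply: filter_uniq; apply: enum_uniq.
- by move=> x; rewrite mem_enum mem_filter inE mem_enum andbT.
Qed.

Lemma count_iota_ge a n : count (fun k => a <= k)%N (iota 0 (a + n)) = n.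
Proof.
rewrite iotaD count_cat add0n.
rewrite (@eq_in_count _ _ (fun _ => false)); last first.
  by move=> k; rewrite mem_iota add0n => /andP [_ h]; apply/negbTE; rewrite -ltnNge.
rewrite (@eq_in_count _ _ (fun _ => true) (iota a n)); last first.
  by move=> k; rewrite mem_iota => /andP [h _].
rewrite count_true size_iota.
by elim: (iota 0 a) => //.
Qed.

Lemma card_K m (r : {perm 'I_m}) n : (n <= m)%N -> #|Kset r n| = n.
Proof.
move=> nm; rewrite /Kset card_imset; last exact: perm_inj.
rewrite card_true_count.
have -> : count (fun k : 'I_m => m - n <= k)%N (enum 'I_m) =
          count (fun k => m - n <= k)%N [seq val i | i <- enum 'I_m].
  by rewrite count_map.
rewrite val_enum_ord.
by have := count_iota_ge (m - n) n; rewrite subnK.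
Qed.

Lemma orderL (R : realFieldType) m (p : 'I_m -> R) (r : {perm 'I_m})
  (hr : forall k l : 'I_m, (k <= l)%N -> p (r k) <= p (r l)) n x y z :
  y \in Kset r n -> p y <= x -> x < p z -> z \in Kset r n.
Proof.
rewrite !memK => hy pyx xz.
case: (leqP ((r^-1)%g z) ((r^-1)%g y)) => hzy.
- have := hr _ _ hzy; rewrite !permKV => h.
  have := le_lt_trans (le_trans h pyx) xz; by rewrite ltxx.
- exact: leq_trans hy (ltnW hzy).
Qed.

Lemma F2 (R : realFieldType) m (p : 'I_m -> R) (r : {perm 'I_m})
  (hr : forall k l : 'I_m, (k <= l)%N -> p (r k) <= p (r l)) n (J : {set 'I_m}) x :
  (n <= m)%N -> #|J| = n -> (Ncnt p (Kset r n) x <= Ncnt p J x)%N.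
Proof.
move=> nm cJ.
have sK := Ncnt_split p (Kset r n) x; have sJ := Ncnt_split p J x.
rewrite card_K // in sK.
case: (posnP (Ncnt p (Kset r n) x)) => [-> //| pos].
have : (#|[set j in J | (x < p j)%R]| <= #|[set j in Kset r n | (x < p j)%R]|)%N.
  apply: subset_leq_card; apply/subsetP => j; rewrite !inE => /andP [_ hj].
  rewrite hj andbT.
  move: pos; rewrite /Ncnt card_gt0 => /set0Pn [y]; rewrite inE => /andP [yK yx].
  exact: orderL hr _ _ _ _ yK yx hj.
lia.
Qed.

Lemma ivt (f : nat -> nat) h n : (f 0 <= h)%N -> (h <= f n)%N ->
  (forall t, f t.+1 <= (f t).+1)%N -> exists t, f t = h.
Proof.
move=> h0 hn st; elim: n hn => [|n IH] hn.
- by exists 0%N; apply/eqP; rewrite eqn_leq h0 hn.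
- case: (leqP h (f n)) => [/IH //|lt].
  exists n.+1; have := st n; lia.
Qed.

Lemma K_step m (r : {perm 'I_m}) (I : {set 'I_m}) t :
  (#|I :|: Kset r t.+1| <= (#|I :|: Kset r t|).+1)%N.
Proof.
case: (set_0Vmem (Kset r t.+1 :\: Kset r t)) => [e | [z hz]].
- apply: leq_trans (leqnSn _); apply: subset_leq_card; apply: setUS.
  by rewrite -setD_eq0 e.
- apply: (@leq_trans #|z |: (I :|: Kset r t)|).
  + apply: subset_leq_card; apply/subsetP => w; rewrite in_setU => /orP [wI | wK].
      by rewrite in_setU1 in_setU wI orbT.
    rewrite in_setU1 in_setU.
    case: (boolP (w \in Kset r t)) => [wt | wn]; first by rewrite !orbT.
    move: hz; rewrite in_setD => /andP [zn zK].
    apply/orP; left; apply/eqP.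
    move: wK wn zK zn; rewrite !memK -!ltnNge => a b c d.
    rewrite -(permKV r w) -(permKV r z); congr (r _); apply: val_inj => /=; lia.
  + by rewrite cardsU1; case: (_ \notin _).
Qed.

Lemma iffT {A B C : Prop} : (A <-> B) -> (B <-> C) -> (A <-> C).
Proof. tauto. Qed.
Lemma iffS {A B : Prop} : (A <-> B) -> (B <-> A).
Proof. tauto. Qed.

Unset Implicit Arguments.

Theorem lemma2 (R : realFieldType) (m : nat) (p : 'I_m -> R) (alpha : R)
  (r : {perm 'I_m})
  (hp : forall j, 0 <= p j <= 1)
  (halpha : 0 <= alpha <= 1)
  (hr : forall k l : 'I_m, (k <= l)%N -> p (r k) <= p (r l))
  (I : {set 'I_m}) :
  closed_rej alpha p I <->
  (exists i : nat, [/\ (1 <= i)%N, (i <= #|I|)%N &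
     (h_alpha alpha p r)%:R * pord p I i <= i%:R * alpha]).
Proof.
move: halpha => /andP [a0 _].
have hp0 : forall j, 0 <= p j by move=> j; case/andP: (hp j).
set h := h_alpha alpha p r.
have K0 : ~~ simes_rej alpha p (Kset r 0).
  apply/existsP => [[i _]]; have := ltn_ord i; move: (nat_of_ord i); by rewrite card_K.
have [H1 hm] : ~~ simes_rej alpha p (Kset r h) /\ (h <= m)%N.
  rewrite /h /h_alpha.
  apply: (big_ind (fun v => ~~ simes_rej alpha p (Kset r v) /\ (v <= m)%N)).
  - by split.
  - move=> a b [Ha am] [Hb bm]; rewrite /maxn; by case: ltnP.
  - by move=> i Hi; split => //; have := ltn_ord i.
have H2 : forall n, (n <= m)%N -> ~~ simes_rej alpha p (Kset r n) -> (n <= h)%N.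
  move=> n nm Hn; rewrite /h /h_alpha.
  exact: (@leq_bigmax_cond _ (fun i : 'I_m.+1 => ~~ simes_rej alpha p (Kset r i))
            (fun i => nat_of_ord i) (Ordinal (nm : (n < m.+1)%N))).
have SR : forall J, simes_rej alpha p J <->
    exists x, (0 < Ncnt p J x)%N /\ #|J|%:R * x <= (Ncnt p J x)%:R * alpha.
  move=> J; have := simesE p alpha J.
  have := bridge p (c := #|J|%:R) J (ler0n _ _) a0; tauto.
have RHS : (exists i : nat, [/\ (1 <= i)%N, (i <= #|I|)%N &
     h%:R * pord p I i <= i%:R * alpha]) <->
    exists x, (0 < Ncnt p I x)%N /\ h%:R * x <= (Ncnt p I x)%:R * alpha.
  apply: iffT (bridge p (c := h%:R) I (ler0n _ _) a0).
  split.
  - move=> [i [i1 iI hi]]; exists i.-1; split; first by lia.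
    by rewrite prednK.
  - by move=> [i [lti hi]]; exists i.+1; split.
apply: iffT (iffS RHS); split.
- move=> cl.
  have cI : simes_rej alpha p I by have := forallP cl I; rewrite subxx.
  move/SR: cI => [x0 [n0 hx0]].
  case: (ltnP h #|I|) => [hI | Ih].
  + exists x0; split => //; apply: le_trans hx0; apply: ler_wpM2r.
    * exact: (Ncnt_ge0 hp0 n0).
    * by rewrite ler_nat; exact: ltnW.
  + have [t ft] : exists t, #|I :|: Kset r t| = h.
      apply: (@ivt (fun t => #|I :|: Kset r t|) h m).
      - have K0e : Kset r 0 = set0 by apply/eqP; rewrite -cards_eq0 card_K.
        by rewrite /= K0e setU0.
      - apply: leq_trans hm _; rewrite /= -{1}(card_K r (leqnn m)).
        apply: subset_leq_card; exact: subsetUr.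
      - exact: K_step.
    have cJ : simes_rej alpha p (I :|: Kset r t)
      by have := forallP cl (I :|: Kset r t); rewrite subsetUl.
    move/SR: cJ; rewrite ft => [[x [nJ hx]]].
    case: (boolP [exists y in Kset r t :\: I, p y <= x]) => [/exists_inP [y yKI yx] | nex].
    * exfalso; move/negP: H1; apply; apply/SR; exists x.
      have NK : (Ncnt p (I :|: Kset r t) x <= Ncnt p (Kset r h) x)%N.
        have sK := Ncnt_split p (Kset r h) x.
        have sJ := Ncnt_split p (I :|: Kset r t) x.
        rewrite card_K // in sK; rewrite ft in sJ.
        have : (#|[set j in Kset r h | (x < p j)%R]| <=
                #|[set j in I :|: Kset r t | (x < p j)%R]|)%N.
          apply: subset_leq_card; apply/subsetP => j; rewrite !inE => /andP [_ hj].
          rewrite hj andbT.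
          move: yKI; rewrite in_setD => /andP [_ yK].
          by rewrite (orderL hr yK yx hj) orbT.
        lia.
      rewrite card_K //; split; first by lia.
      apply: le_trans hx _; apply: ler_wpM2r => //; by rewrite ler_nat.
    * exists x.
      have NI : (Ncnt p (I :|: Kset r t) x <= Ncnt p I x)%N.
        apply: subset_leq_card; apply/subsetP => j; rewrite !inE => /andP [jJ hj].
        rewrite hj andbT.
        case: (boolP (j \in I)) => // jn.
        move/negP: nex; case; apply/exists_inP; exists j => //.
        by rewrite in_setD jn /=; move: jJ; rewrite (negbTE jn).
      split; first by lia.
      apply: le_trans hx _; apply: ler_wpM2r => //; by rewrite ler_nat.
- move=> [x0 [n0 hx0]]; apply/forallP => J; apply/implyP => sIJ; apply/SR.
  case: (leqP #|J| h) => [Jh | hJ].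
  + exists x0; have NIJ := Ncnt_sub p x0 sIJ; split; first by lia.
    apply: le_trans (le_trans _ hx0) _.
    * apply: ler_wpM2r; [exact: (Ncnt_ge0 hp0 n0) | by rewrite ler_nat].
    * apply: ler_wpM2r => //; by rewrite ler_nat.
  + have Jm : (#|J| <= m)%N by have := max_card (mem J); rewrite card_ord.
    have rK : simes_rej alpha p (Kset r #|J|).
      case/boolP: (simes_rej alpha p (Kset r #|J|)) => // nr.
      have := H2 _ Jm nr; lia.
    move/SR: rK => [x [nK hx]]; rewrite card_K // in hx.
    have NK := @F2 _ _ p r hr #|J| J x Jm erefl.
    exists x; split; first by lia.
    apply: le_trans hx _; apply: ler_wpM2r => //; by rewrite ler_nat.
Qed.
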